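(* The category $\mathsf{HSLat}$ of Heyting semilattices is not action accessible.
   Context: A Heyting semilattice is a meet-semilattice with top $1$ and an operation $\Rightarrow$ with $x\wedge y\le z$ iff $x\le y\Rightarrow z$; morphisms preserve $1,\wedge,\Rightarrow$; $\mathsf{HSLat}$ is semi-abelian. For an object $X$ of a semi-abelian category $\mathcal C$, $\mathsf{SpltExt}_{\mathcal C}(X)$ is the category of split extensions $X\xrightarrow{\kappa}A\rightleftarrows B$ (with $\alpha\colon A\to B$, $\beta\colon B\to A$, $\alpha\beta=1_B$, $\kappa=\ker\alpha$), whose morphisms are morphisms of extensions which are the identity on $X$ and commute with the sections. An object of a category is subterminal if every object admits at most one morphism into it; a category has enough subterminal objects if every object admits a morphism into a subterminal object. $\mathcal C$ is action accessible if for every object $X$, $\mathsf{SpltExt}_{\mathcal C}(X)$ has enough subterminal objects. *)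

(* Defs.v *)
(** Heyting semilattices, as algebras (meet-semilattice with top 1,
    order x <= y :<-> x /\ y = x, and an implication residuating meet). *)
Record HSL := MkHSL {
  car :> Type;
  hmeet : car -> car -> car;
  htop : car;
  himp : car -> car -> car;
  hmeetA : forall x y z, hmeet x (hmeet y z) = hmeet (hmeet x y) z;
  hmeetC : forall x y, hmeet x y = hmeet y x;
  hmeetxx : forall x, hmeet x x = x;
  hmeet_top : forall x, hmeet x htop = x;
  hresid : forall x y z,
    hmeet (hmeet x y) z = hmeet x y <-> hmeet x (himp y z) = x
}.
Arguments hmeet {h}.
Arguments htop {h}.
Arguments himp {h}.

Record hom (A B : HSL) := MkHom {
  hfun :> A -> B;
  hom_top : hfun htop = htop;
  hom_meet : forall x y, hfun (hmeet x y) = hmeet (hfun x) (hfun y);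
  hom_imp : forall x y, hfun (himp x y) = himp (hfun x) (hfun y)
}.

(** [k] is a kernel of [a] in HSLat: the zero object is the one-element
    algebra, so the zero morphism Y -> B is the constant map at 1. *)
Definition is_kernel {X A B : HSL} (k : hom X A) (a : hom A B) : Prop :=
  (forall x, a (k x) = htop) /\
  (forall (Y : HSL) (f : hom Y A), (forall y, a (f y) = htop) ->
     exists g : hom Y X, (forall y, k (g y) = f y) /\
       (forall g' : hom Y X, (forall y, k (g' y) = f y) -> forall y, g' y = g y)).

Record SplitExt (X : HSL) := MkSplitExt {
  seA : HSL;
  seB : HSL;
  kappa : hom X seA;
  alpha : hom seA seB;
  beta : hom seB seA;
  alpha_beta : forall b, alpha (beta b) = b;
  kappa_ker : is_kernel kappa alpha
}.
Arguments seA {X}.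
Arguments seB {X}.
Arguments kappa {X}.
Arguments alpha {X}.
Arguments beta {X}.

Record se_mor {X : HSL} (E E' : SplitExt X) := MkSeMor {
  morA : hom (seA E) (seA E');
  morB : hom (seB E) (seB E');
  mor_kappa : forall x, morA (kappa E x) = kappa E' x;
  mor_alpha : forall a, alpha E' (morA a) = morB (alpha E a);
  mor_beta : forall b, morA (beta E b) = beta E' (morB b)
}.
Arguments morA {X E E'}.
Arguments morB {X E E'}.

Definition subterminal {X : HSL} (S : SplitExt X) : Prop :=
  forall (E : SplitExt X) (m1 m2 : se_mor E S),
    (forall a, morA m1 a = morA m2 a) /\ (forall b, morB m1 b = morB m2 b).

Definition enough_subterminal (X : HSL) : Prop :=
  forall E : SplitExt X, exists S : SplitExt X, subterminal S /\ inhabited (se_mor E S).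

Definition action_accessible_HSLat : Prop :=
  forall X : HSL, enough_subterminal X.

(* Main.v *)
Require Import Defs.

(* Counterexample: X = 2, B = 3-chain, A = 4-chain (Artin glueing of f: 3 -> 2
   with f 0 = f m = 0).  Two morphisms from the extension E' (A'=3-chain, B'=2)
   into E force any map into a subterminal object to collapse the kernel. *)

Ltac fin := cbv; split; intro; congruence.

Inductive two := Z0 | Z1.
Definition m2 (x y : two) := match x with Z0 => Z0 | Z1 => y end.
Definition i2 (x y : two) := match x with Z0 => Z1 | Z1 => y end.
Definition Two : HSL.
  refine (MkHSL two m2 Z1 i2 _ _ _ _ _);
  intros; repeat match goal with x : two |- _ => destruct x end; try reflexivity; fin.
Defined.

Inductive three := T0 | Tm | T1.
Definition r3 (x : three) := match x with T0 => 0 | Tm => 1 | T1 => 2 end.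
Definition m3 (x y : three) := if Nat.leb (r3 x) (r3 y) then x else y.
Definition i3 (x y : three) := if Nat.leb (r3 x) (r3 y) then T1 else y.
Definition Three : HSL.
  refine (MkHSL three m3 T1 i3 _ _ _ _ _);
  intros; repeat match goal with x : three |- _ => destruct x end; try reflexivity; fin.
Defined.

Inductive four := C0 | C1 | C2 | C3.
Definition r4 (x : four) := match x with C0 => 0 | C1 => 1 | C2 => 2 | C3 => 3 end.
Definition m4 (x y : four) := if Nat.leb (r4 x) (r4 y) then x else y.
Definition i4 (x y : four) := if Nat.leb (r4 x) (r4 y) then C3 else y.
Definition Four : HSL.
  refine (MkHSL four m4 C3 i4 _ _ _ _ _);
  intros; repeat match goal with x : four |- _ => destruct x end; try reflexivity; fin.
Defined.

Ltac homtac := intros; repeat match goal with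
  | x : two |- _ => destruct x | x : three |- _ => destruct x
  | x : four |- _ => destruct x end; reflexivity.

Definition kE_f (x : two) : four := match x with Z0 => C2 | Z1 => C3 end.
Definition kE : hom Two Four.
  refine (MkHom Two Four kE_f _ _ _); simpl; homtac. Defined.
Definition aE_f (x : four) : three := match x with C0 => T0 | C1 => Tm | _ => T1 end.
Definition aE : hom Four Three.
  refine (MkHom Four Three aE_f _ _ _); simpl; homtac. Defined.
Definition bE_f (x : three) : four := match x with T0 => C0 | Tm => C1 | T1 => C3 end.
Definition bE : hom Three Four.
  refine (MkHom Three Four bE_f _ _ _); simpl; homtac. Defined.

Definition kE'_f (x : two) : three := match x with Z0 => Tm | Z1 => T1 end.
Definition kE' : hom Two Three.
  refine (MkHom Two Three kE'_f _ _ _); simpl; homtac. Defined.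
Definition aE'_f (x : three) : two := match x with T0 => Z0 | _ => Z1 end.
Definition aE' : hom Three Two.
  refine (MkHom Three Two aE'_f _ _ _); simpl; homtac. Defined.
Definition bE'_f (x : two) : three := match x with Z0 => T0 | Z1 => T1 end.
Definition bE' : hom Two Three.
  refine (MkHom Two Three bE'_f _ _ _); simpl; homtac. Defined.

Lemma kernel_from_retract {X A B : HSL} (k : hom X A) (a : hom A B) (r : A -> X)
  (Hk : forall x, a (k x) = htop)
  (Hr : forall z, a z = htop -> k (r z) = z)
  (Hrt : r htop = htop)
  (Hrm : forall z w, a z = htop -> a w = htop -> r (hmeet z w) = hmeet (r z) (r w))
  (Hri : forall z w, a z = htop -> a w = htop -> r (himp z w) = himp (r z) (r w))
  (Hinj : forall x y, k x = k y -> x = y) : is_kernel k a.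
Proof.
  split; [exact Hk|].
  intros Y f Hf.
  unshelve eexists (MkHom Y X (fun y => r (f y)) _ _ _).
  - simpl; rewrite (hom_top _ _ f); exact Hrt.
  - intros; simpl; rewrite (hom_meet _ _ f); apply Hrm; apply Hf.
  - intros; simpl; rewrite (hom_imp _ _ f); apply Hri; apply Hf.
  - split.
    + intros y; simpl; apply Hr, Hf.
    + intros g' Hg' y; apply Hinj; rewrite Hg'; simpl; rewrite Hr; auto.
Qed.

Definition rE (z : four) : two := match z with C3 => Z1 | _ => Z0 end.
Lemma kerE : is_kernel kE aE.
Proof.
  apply (kernel_from_retract kE aE rE); simpl; homtac ||
  (intros; repeat match goal with
  | x : two |- _ => destruct x | x : four |- _ => destruct x end;
   simpl in *; try discriminate; reflexivity).
Qed.

Definition rE' (z : three) : two := match z with T1 => Z1 | _ => Z0 end.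
Lemma kerE' : is_kernel kE' aE'.
Proof.
  apply (kernel_from_retract kE' aE' rE'); simpl; homtac ||
  (intros; repeat match goal with
  | x : two |- _ => destruct x | x : three |- _ => destruct x end;
   simpl in *; try discriminate; reflexivity).
Qed.

Definition E : SplitExt Two.
  refine (MkSplitExt Two Four Three kE aE bE _ kerE). simpl; homtac. Defined.
Definition E' : SplitExt Two.
  refine (MkSplitExt Two Three Two kE' aE' bE' _ kerE'). simpl; homtac. Defined.

Definition U1A_f (x : three) : four := match x with T0 => C0 | Tm => C2 | T1 => C3 end.
Definition U1A : hom Three Four.
  refine (MkHom Three Four U1A_f _ _ _); simpl; homtac. Defined.
Definition U1B_f (x : two) : three := match x with Z0 => T0 | Z1 => T1 end.
Definition U1B : hom Two Three.
  refine (MkHom Two Three U1B_f _ _ _); simpl; homtac. Defined.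
Definition U2A_f (x : three) : four := match x with T0 => C1 | Tm => C2 | T1 => C3 end.
Definition U2A : hom Three Four.
  refine (MkHom Three Four U2A_f _ _ _); simpl; homtac. Defined.
Definition U2B_f (x : two) : three := match x with Z0 => Tm | Z1 => T1 end.
Definition U2B : hom Two Three.
  refine (MkHom Two Three U2B_f _ _ _); simpl; homtac. Defined.

Definition U1 : se_mor E' E.
  refine (MkSeMor Two E' E U1A U1B _ _ _); simpl; homtac. Defined.
Definition U2 : se_mor E' E.
  refine (MkSeMor Two E' E U2A U2B _ _ _); simpl; homtac. Defined.

Definition comp_hom {A B C : HSL} (g : hom B C) (f : hom A B) : hom A C.
  refine (MkHom A C (fun x => g (f x)) _ _ _).
  - rewrite !hom_top; reflexivity.
  - intros; rewrite !hom_meet; reflexivity.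
  - intros; rewrite !hom_imp; reflexivity.
Defined.

Definition comp_mor {X : HSL} {E1 E2 E3 : SplitExt X} (g : se_mor E2 E3) (f : se_mor E1 E2)
  : se_mor E1 E3.
  refine (MkSeMor X E1 E3 (comp_hom (morA g) (morA f)) (comp_hom (morB g) (morB f)) _ _ _);
  simpl; intros.
  - rewrite !mor_kappa; reflexivity.
  - rewrite !mor_alpha; reflexivity.
  - rewrite !mor_beta; reflexivity.
Defined.

Theorem mainTheorem6 : ~ action_accessible_HSLat.
Proof.
  intro H.
  destruct (H Two E) as [S [Hsub [F]]].
  destruct (Hsub E' (comp_mor F U1) (comp_mor F U2)) as [_ HB].
  specialize (HB Z0). simpl in HB.
  (* HB : morB F T0 = morB F Tm *)
  assert (H0 : morB F (T0 : Three) = htop).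
  { transitivity (morB F (himp (Tm : Three) (T0 : Three))); [reflexivity|].
    rewrite hom_imp, <- HB, <- hom_imp. apply hom_top. }
  assert (Hb : morA F (beta E (T0 : Three)) = htop).
  { rewrite (mor_beta _ _ F), H0. apply hom_top. }
  assert (Hm : hmeet (beta E (T0 : Three)) (kappa E (Z0 : Two)) = beta E (T0 : Three))
    by reflexivity.
  assert (Hk : kappa S (Z0 : Two) = htop).
  { transitivity (hmeet (htop : seA S) (kappa S (Z0 : Two))).
    { rewrite hmeetC, hmeet_top; reflexivity. }
    rewrite <- Hb, <- (mor_kappa _ _ F), <- hom_meet, Hm. reflexivity. }
  destruct (kappa_ker _ S) as [Hka Huniq].
  destruct (Huniq Two (kappa S) Hka) as [g [_ Hg]].
  set (c1 := MkHom Two Two (fun _ => Z1) eq_refl (fun _ _ => eq_refl) (fun _ _ => eq_refl)).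
  set (id2 := MkHom Two Two (fun x => x) eq_refl (fun _ _ => eq_refl) (fun _ _ => eq_refl)).
  assert (E1 := Hg c1). assert (E2 := Hg id2).
  assert (Hc : forall y : Two, kappa S (c1 y) = kappa S y).
  { intros [|]; simpl. - rewrite Hk; symmetry; symmetry; exact (hom_top _ _ (kappa S)). - reflexivity. }
  assert (Hi : forall y : Two, kappa S (id2 y) = kappa S y) by reflexivity.
  specialize (E1 Hc Z0). specialize (E2 Hi Z0). simpl in E1, E2.
  rewrite <- E2 in E1. discriminate.
Qed.
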